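(* Let $f\in\mathcal{H}_{\rm fin}$ have level $N$ and satisfy the geometric assumptions. If $f(1)\ne0$, then $k(\mathcal{F})\mid N$ (that is, $N/k(\mathcal{F})\in\mathbb{Z}$).
   Context: $\mathcal{H}_{\rm fin}$: locally constant functions on $\mathrm{GL}_2(\mathbb{A}_{\rm fin})$ invariant under and compactly supported modulo the center $Z$. $K=\mathrm{GL}_2(\widehat{\mathbb{Z}})$, $K(N)$ its principal congruence subgroup; the level of $f$ is the minimal $N$ with $f$ bi-$K(N)$-invariant. Geometric assumptions: (i) $f$ is bi-invariant under $\{\mathrm{diag}(u,1):u\in\widehat{\mathbb{Z}}^\times\}$; (ii) $\mathrm{supp}\,f\subseteq a(y)^{-1}ZKa(y)$ for some $y\in\mathbb{Q}_+$, $a(y)=\mathrm{diag}(y,1)$. Kloosterman sums: $H(m_1,m_2;c)=\iint_{\mathbb{A}_{\rm fin}^2}f\big(n(-t_1)\begin{pmatrix}0&-c^{-2}\\1&0\end{pmatrix}n(t_2)\big)\psi_{\rm fin}(m_1t_1-m_2t_2)dt_1dt_2$ for $m_i\in\mathbb{Q}$, $c\in\mathbb{Q}_+$, where $n(x)=\begin{pmatrix}1&x\\0&1\end{pmatrix}$ and $\psi_{\rm fin}=\prod_pe(\{\cdot\}_p)$. A $c\in\mathbb{Q}_+$ is an admissible modulus if $H(\cdot,\cdot;c)\not\equiv0$; the geometric conductor $k(\mathcal{F})\in\mathbb{Q}_+$ is the maximal by divisibility $q'$ such that every admissible modulus lies in $q'\mathbb{Z}$ (it exists under (ii)). *)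

(* Defs.v *)
From mathcomp Require Import all_boot all_algebra.
From mathcomp Require Import reals trigo.
From mathcomp.real_closed Require Import complex.
Set Implicit Arguments. Unset Strict Implicit. Unset Printing Implicit Defensive.
Import GRing.Theory Num.Theory.
Local Open Scope ring_scope.

(* A_fin / M*Zhat = Q / M*Z  (strong approximation: A_fin = Q + Zhat,        *)
(* Q cap Zhat = Z), hence A_fin = lim_M Q / M Z.  An adele is encoded as the *)
(* compatible family of its classes modulo M Zhat, M = n.+1, each class      *)
(* being represented by its unique rational representative in [0, M).        *)

Definition in_Z (q : rat) : bool := denq q == 1.

Definition modQ (M : nat) (q : rat) : rat :=
  q - M%:R * (Num.floor (q / M%:R))%:~R.

Definition adl := nat -> rat.   (* raw family: index n <-> modulus n.+1 *)

Definition adele (x : adl) : Prop :=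
  (forall n, 0 <= x n /\ x n < n.+1%:R) /\
  (forall n m, (n.+1 %| m.+1)%N -> in_Z ((x m - x n) / n.+1%:R)).

Definition ofQ (q : rat) : adl := fun n => modQ n.+1 q.

Definition adl_add (x y : adl) : adl := fun n => modQ n.+1 (x n + y n).
Definition adl_opp (x : adl) : adl := fun n => modQ n.+1 (- x n).
Definition adl_sub (x y : adl) : adl := adl_add x (adl_opp y).

(* denominator of the class of x in A_fin / Zhat = Q / Z *)
Definition adl_den (x : adl) : nat := `|denq (x 0%N)|%N.

(* x = r + z, y = s + w (r, s rational, z, w in Zhat):
   xy = xy mod M Zhat is computed from x mod (M den y) and y mod (M den x). *)
Definition adl_mul (x y : adl) : adl :=
  fun n => modQ n.+1 (x (n.+1 * adl_den y).-1 * y (n.+1 * adl_den x).-1).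

Definition adl0 : adl := ofQ 0.
Definition adl1 : adl := ofQ 1.

Definition integral (x : adl) : Prop := x 0%N = 0.
Definition in_MZhat (M : nat) (x : adl) : Prop := x M.-1 = 0.
Definition in_invDZhat (D : nat) (x : adl) : Prop := in_Z (D%:R * x 0%N).

Definition adl_unit (x : adl) : Prop :=
  exists y, adele y /\ adl_mul x y = adl1.
Definition Zhat_unit (x : adl) : Prop :=
  integral x /\ exists y, adele y /\ integral y /\ adl_mul x y = adl1.

(* finite additive character psi_fin = prod_p e({x}_p); since
   sum_p {x}_p = (class of x in Q/Z), psi_fin(x) = e(x mod Zhat). *)
Definition e_ (R : realType) (t : R) : R[i] :=
  Complex (cos (2 * pi * t)) (sin (2 * pi * t)).
Definition psi_fin (R : realType) (x : adl) : R[i] := e_ (ratr (x 0%N)).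

Record mat2 := M2 { m11 : adl; m12 : adl; m21 : adl; m22 : adl }.

Definition mmul (g h : mat2) : mat2 :=
  M2 (adl_add (adl_mul (m11 g) (m11 h)) (adl_mul (m12 g) (m21 h)))
     (adl_add (adl_mul (m11 g) (m12 h)) (adl_mul (m12 g) (m22 h)))
     (adl_add (adl_mul (m21 g) (m11 h)) (adl_mul (m22 g) (m21 h)))
     (adl_add (adl_mul (m21 g) (m12 h)) (adl_mul (m22 g) (m22 h))).

Definition mdet (g : mat2) : adl :=
  adl_sub (adl_mul (m11 g) (m22 g)) (adl_mul (m12 g) (m21 g)).

Definition madele (g : mat2) : Prop :=
  adele (m11 g) /\ adele (m12 g) /\ adele (m21 g) /\ adele (m22 g).

Definition GL2 (g : mat2) : Prop := madele g /\ adl_unit (mdet g).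

Definition center (z : mat2) : Prop :=
  exists u, adele u /\ adl_unit u /\ z = M2 u adl0 adl0 u.

Definition Kmax (k : mat2) : Prop :=
  madele k /\ integral (m11 k) /\ integral (m12 k) /\ integral (m21 k)
  /\ integral (m22 k) /\ Zhat_unit (mdet k).

Definition KN (N : nat) (k : mat2) : Prop :=
  Kmax k /\ in_MZhat N (adl_sub (m11 k) adl1) /\ in_MZhat N (m12 k)
  /\ in_MZhat N (m21 k) /\ in_MZhat N (adl_sub (m22 k) adl1).

Definition mat1 : mat2 := M2 adl1 adl0 adl0 adl1.
Definition nmat (x : adl) : mat2 := M2 adl1 x adl0 adl1.
Definition amat (y : rat) : mat2 := M2 (ofQ y) adl0 adl0 adl1.
Definition dmat (u : adl) : mat2 := M2 u adl0 adl0 adl1.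
Definition wmat (c : rat) : mat2 :=
  M2 adl0 (adl_opp (ofQ (c ^- 2))) adl1 adl0.

Definition bi_inv (P : mat2 -> Prop) (R : realType) (f : mat2 -> R[i]) :=
  forall g k1 k2, GL2 g -> P k1 -> P k2 -> f (mmul k1 (mmul g k2)) = f g.

Definition in_Hfin (R : realType) (f : mat2 -> R[i]) : Prop :=
  (forall z g, center z -> GL2 g -> f (mmul z g) = f g) /\
  (* locally constant (smooth): bi-invariant under some open K(M) *)
  (exists M, (0 < M)%N /\ bi_inv (KN M) f) /\
  (* compactly supported modulo Z: support in Z * (finite union of g_i K) *)
  (exists (n : nat) (gs : 'I_n -> mat2), (forall i, GL2 (gs i)) /\
     forall g, GL2 g -> f g != 0 ->
       exists z i k, center z /\ Kmax k /\ g = mmul z (mmul (gs i) k)).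

Definition has_level (R : realType) (f : mat2 -> R[i]) (N : nat) : Prop :=
  (0 < N)%N /\ bi_inv (KN N) f /\
  forall M, (0 < M)%N -> bi_inv (KN M) f -> (N <= M)%N.

Definition geom_i (R : realType) (f : mat2 -> R[i]) : Prop :=
  bi_inv (fun k => exists u, adele u /\ Zhat_unit u /\ k = dmat u) f.

Definition geom_ii (R : realType) (f : mat2 -> R[i]) : Prop :=
  exists y : rat, 0 < y /\
    forall g, GL2 g -> f g != 0 ->
      exists z k, center z /\ Kmax k /\
        g = mmul (amat y^-1) (mmul z (mmul k (amat y))).

(* Haar integral on A_fin^2 (dt normalized by vol(Zhat) = 1) of a locally    *)
(* constant compactly supported g: if g is (M Zhat)^2-invariant and supported *)
(* in (D^{-1} Zhat)^2, the cosets of M Zhat in D^{-1}Zhat are represented by  *)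
(* k/D, 0 <= k < MD, each of volume 1/M.                                      *)
Definition HaarInt2 (R : realType) (g : adl -> adl -> R[i]) (I : R[i]) : Prop :=
  exists M D : nat, (0 < M)%N /\ (0 < D)%N /\
    (forall t1 t2 u1 u2, adele t1 -> adele t2 -> adele u1 -> adele u2 ->
        in_MZhat M u1 -> in_MZhat M u2 ->
        g (adl_add t1 u1) (adl_add t2 u2) = g t1 t2) /\
    (forall t1 t2, adele t1 -> adele t2 -> g t1 t2 != 0 ->
        in_invDZhat D t1 /\ in_invDZhat D t2) /\
    I = (M ^ 2)%:R^-1 *
        \sum_(k1 < M * D) \sum_(k2 < M * D)
           g (ofQ (k1%:R / D%:R)) (ofQ (k2%:R / D%:R)).

Definition Kloosterman (R : realType) (f : mat2 -> R[i]) (m1 m2 c : rat)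
  (I : R[i]) : Prop :=
  HaarInt2 (fun t1 t2 =>
     f (mmul (nmat (adl_opp t1)) (mmul (wmat c) (nmat t2))) *
     psi_fin R (adl_sub (adl_mul (ofQ m1) t1) (adl_mul (ofQ m2) t2))) I.

Definition admissible (R : realType) (f : mat2 -> R[i]) (c : rat) : Prop :=
  0 < c /\ exists m1 m2 I, Kloosterman f m1 m2 c I /\ I != 0.

Definition divides_moduli (R : realType) (f : mat2 -> R[i]) (q : rat) : Prop :=
  0 < q /\ forall c, admissible f c -> in_Z (c / q).

Definition geom_conductor (R : realType) (f : mat2 -> R[i]) (k : rat) : Prop :=
  divides_moduli f k /\ forall q, divides_moduli f q -> in_Z (k / q).

(* Main.v *)
Require Import Defs.
From mathcomp Require Import all_boot all_algebra.
From mathcomp Require Import reals trigo.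
From mathcomp.real_closed Require Import complex.
From Stdlib Require Import Lia.
From HB Require Import structures.
From mathcomp Require Import zify.
From mathcomp Require Import order.
From mathcomp Require Import boolp.
From mathcomp Require Import ring lra.
Set Implicit Arguments. Unset Strict Implicit. Unset Printing Implicit Defensive.
Import Order.TTheory GRing.Theory Num.Theory.
Local Open Scope ring_scope.

Lemma in_ZP (q : rat) : in_Z q <-> exists z : int, q = z%:~R.
Proof. by rewrite /in_Z -Qint_def; split => [/intrP|/intrP]. Qed.

Lemma in_Z_int (z : int) : in_Z z%:~R.
Proof. by apply/in_ZP; exists z. Qed.

Lemma in_ZD a b : in_Z a -> in_Z b -> in_Z (a + b).
Proof. by rewrite /in_Z -!Qint_def => h1 h2; rewrite rpredD. Qed.
Lemma in_ZN a : in_Z a -> in_Z (- a).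
Proof. by rewrite /in_Z -!Qint_def => h; rewrite rpredN. Qed.
Lemma in_ZM a b : in_Z a -> in_Z b -> in_Z (a * b).
Proof. by rewrite /in_Z -!Qint_def => h1 h2; rewrite rpredM. Qed.
Lemma in_ZB a b : in_Z a -> in_Z b -> in_Z (a - b).
Proof. by move=> ha hb; apply: in_ZD => //; apply: in_ZN. Qed.
Lemma in_Z0 : in_Z 0. Proof. by []. Qed.
Lemma in_Z1 : in_Z 1. Proof. by []. Qed.
Lemma in_Zn (n : nat) : in_Z n%:R.
Proof. by apply/in_ZP; exists n%:Z. Qed.

Definition cong (L : nat) (a b : rat) : Prop := in_Z ((a - b) / L%:R).

Lemma congP L a b : (0 < L)%N -> cong L a b <-> exists z : int, a = b + L%:R * z%:~R.
Proof.
move=> L0; have LR : (L%:R : rat) != 0 by rewrite pnatr_eq0 -lt0n.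
rewrite /cong in_ZP; split=> -[z hz]; exists z.
  by rewrite -hz mulrC divfK // addrC subrK.
by rewrite hz addrAC subrr add0r mulrC mulKf.
Qed.

Lemma cong_refl L a : cong L a a.
Proof. by rewrite /cong subrr mul0r. Qed.

Lemma cong_sym L a b : cong L a b -> cong L b a.
Proof. by rewrite /cong => h; rewrite -opprB mulNr; apply: in_ZN. Qed.

Lemma cong_trans L a b c : cong L a b -> cong L b c -> cong L a c.
Proof.
rewrite /cong => h1 h2; have := in_ZD h1 h2.
by rewrite -mulrDl addrA subrK.
Qed.

Lemma congD L a b c d : cong L a b -> cong L c d -> cong L (a + c) (b + d).
Proof.
rewrite /cong => h1 h2; have := in_ZD h1 h2.
by rewrite -mulrDl opprD addrACA.
Qed.

Lemma congN L a b : cong L a b -> cong L (- a) (- b).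
Proof. by rewrite /cong => h; rewrite -opprD mulNr; apply: in_ZN. Qed.

Lemma cong_dvd K L a b : (0 < L)%N -> (K %| L)%N -> cong L a b -> cong K a b.
Proof.
move=> L0 /dvdnP [m hm]; have K0 : (0 < K)%N by move: L0; rewrite hm; case: K {hm} => //; rewrite muln0.
move/(congP _ _ L0) => [z hz]; apply/(congP _ _ K0); exists (m%:Z * z).
by rewrite hz hm natrM rmorphM /= mulrA (mulrC (K%:R)) -mulrA.
Qed.

Lemma cong_addz L a (z : int) : cong L (a + L%:R * z%:~R) a.
Proof.
rewrite /cong addrAC subrr add0r.
have [->|L0] := eqVneq L 0%N; first by rewrite mul0r.
by rewrite mulrC mulKf ?pnatr_eq0 //; apply: in_Z_int.
Qed.

Lemma cong1P a b : cong 1 a b <-> in_Z (a - b).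
Proof. by rewrite /cong divr1. Qed.

Lemma modQ_cong L q : (0 < L)%N -> cong L (modQ L q) q.
Proof.
move=> L0; apply/(congP _ _ L0); exists (- Num.floor (q / L%:R)).
by rewrite /modQ rmorphN /= mulrN.
Qed.

Lemma modQ_range L q : (0 < L)%N -> 0 <= modQ L q < L%:R.
Proof.
move=> L0; have LR : (0 : rat) < L%:R by rewrite ltr0n.
rewrite /modQ subr_ge0 ltrBlDl; apply/andP; split.
  by rewrite -ler_pdivlMl // mulrC floor_le.
by rewrite -[X in _ < _ + X]mulr1 -mulrDr -ltr_pdivrMl // mulrC -[1]/(1%:~R) -intrD floorD1_gt.
Qed.

Lemma cong_eq L a b : 0 <= a < L%:R -> 0 <= b < L%:R -> cong L a b -> a = b.
Proof.
move=> /andP[a0 aL] /andP[b0 bL].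
have [L0|L0] := posnP L.
  by subst L; move: (le_lt_trans a0 aL); rewrite ltxx.
move/(congP _ _ L0) => [z hz].
have LR : (0 : rat) < L%:R by rewrite ltr0n.
suff : z = 0 by move=> z0; rewrite hz z0 mulr0 addr0.
have h1 : L%:R * z%:~R < L%:R * 1 :> rat.
  by rewrite mulr1 -(ltrD2l b) -hz (lt_le_trans aL) // lerDr.
have h2 : L%:R * (-1) < L%:R * z%:~R :> rat.
  by rewrite mulrN1 -(ltrD2l b) -hz (lt_le_trans _ a0) // subr_lt0.
rewrite ltr_pM2l // in h1; rewrite ltr_pM2l // in h2.
rewrite -[1]/(1%:~R) ltr_int in h1; rewrite -[-1]/((-1)%:~R) ltr_int in h2.
by case: z h1 h2 {hz} => [[|n]|n].
Qed.

Lemma modQ_eq L a b : (0 < L)%N -> cong L a b -> modQ L a = modQ L b.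
Proof.
move=> L0 h; apply: (cong_eq (L:=L)); rewrite ?modQ_range //.
apply: cong_trans (modQ_cong _ L0) _; apply: cong_trans h _.
by apply: cong_sym; apply: modQ_cong.
Qed.

Lemma modQ_id L a : 0 <= a < L%:R -> modQ L a = a.
Proof.
move=> h; have L0 : (0 < L)%N.
  by case: L h => [/andP[a0 a1]|//]; move: (le_lt_trans a0 a1); rewrite ltxx.
apply: (cong_eq (L:=L)) => //; [exact: modQ_range | exact: modQ_cong].
Qed.

Definition apx (x : adl) (L : nat) (a : rat) := cong L (x L.-1) a.

Lemma adele_range x n : adele x -> 0 <= x n < n.+1%:R.
Proof. by move=> [h _]; apply/andP; apply: h. Qed.

Lemma adele_compat x n m : adele x -> (n.+1 %| m.+1)%N -> cong n.+1 (x m) (x n).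
Proof. by move=> [_ h]; apply: h. Qed.

Lemma apx_self x L : apx x L (x L.-1).
Proof. exact: cong_refl. Qed.

Lemma apx_dvd x K L a : adele x -> (0 < L)%N -> (K %| L)%N -> (0 < K)%N ->
  apx x L a -> apx x K a.
Proof.
move=> ax L0 KL K0; rewrite /apx => h.
have h1 : cong K (x L.-1) a by apply: cong_dvd h.
have h2 : cong K (x L.-1) (x K.-1).
  by have := @adele_compat x K.-1 L.-1 ax; rewrite !prednK //; apply.
exact: cong_trans (cong_sym h2) h1.
Qed.

Lemma apx_big x L K : adele x -> (0 < L)%N -> (K %| L)%N -> (0 < K)%N ->
  apx x K (x L.-1).
Proof. by move=> ax L0 KL K0; apply: apx_dvd ax L0 KL K0 (apx_self _ _). Qed.

Definition bd (x : adl) (D : nat) := (0 < D)%N /\ in_Z (D%:R * x 0%N).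

Lemma adl_den_gt0 x : (0 < adl_den x)%N.
Proof. by rewrite /adl_den absz_gt0 denq_neq0. Qed.

Lemma bd_den x : bd x (adl_den x).
Proof.
split; first exact: adl_den_gt0.
rewrite /adl_den natr_absz gtr0_norm ?ltr0z ?denq_gt0 // mulrC -numqE.
exact: in_Z_int.
Qed.

Lemma cong1_int L a b : (0 < L)%N -> cong L a b -> in_Z (a - b).
Proof. by move=> L0 h; apply/cong1P; apply: cong_dvd h; rewrite ?dvd1n. Qed.

Lemma bd_apx x D L a : adele x -> bd x D -> (0 < L)%N -> apx x L a -> in_Z (D%:R * a).
Proof.
move=> ax [D0 hD] L0 h.
have h1 : in_Z (a - x 0%N).
  have := apx_dvd ax L0 (dvd1n L) (ltn0Sn 0) h; rewrite /apx /= => /cong1P h2.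
  by rewrite -opprB; apply: in_ZN.
have -> : D%:R * a = D%:R * x 0%N + D%:R * (a - x 0%N) by ring.
by apply: in_ZD => //; apply: in_ZM => //; apply: in_Zn.
Qed.

Lemma den_dvd q D : (0 < D)%N -> in_Z (D%:R * q) -> (`|denq q| %| D)%N.
Proof.
move=> D0 /in_ZP [m hm].
have e : (D%:Z * numq q = m * denq q)%R.
  apply: (@intr_inj rat); rewrite !rmorphM /= numqE -[(D%:Z)%:~R]/(D%:R : rat).
  by rewrite mulrA hm.
have : (`|denq q| %| D * `|numq q|)%N.
  apply/dvdnP; exists `|m|%N; rewrite -abszM.
  by rewrite -[(D * _)%N]/(`|D%:Z|%N * `|numq q|)%N -abszM e.
by rewrite Gauss_dvdl // coprime_sym coprime_num_den.
Qed.

Lemma bd_dvd x D : bd x D -> (adl_den x %| D)%N.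
Proof. by move=> [D0 h]; apply: den_dvd. Qed.

Lemma bd_of x D r : (0 < D)%N -> in_Z (D%:R * r) -> cong 1 (x 0%N) r -> bd x D.
Proof.
move=> D0 h /cong1P h1; split => //.
have -> : D%:R * x 0%N = D%:R * r + D%:R * (x 0%N - r) by ring.
by apply: in_ZD => //; apply: in_ZM => //; apply: in_Zn.
Qed.

Lemma mulgt0 a b : (0 < a)%N -> (0 < b)%N -> (0 < a * b)%N.
Proof. by rewrite muln_gt0 => -> ->. Qed.

Lemma prodcong L dx dy X Y a b : (0 < L)%N -> (0 < dx)%N -> (0 < dy)%N ->
  cong (L * dy) X a -> cong (L * dx) Y b -> in_Z (dx%:R * a) -> in_Z (dy%:R * b) ->
  cong L (X * Y) (a * b).
Proof.
move=> L0 x0 y0 /(congP _ _ (mulgt0 L0 y0)) [i hi]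
  /(congP _ _ (mulgt0 L0 x0)) [j hj] /in_ZP [za hza] /in_ZP [zb hzb].
apply/(congP _ _ L0); exists (za * j + zb * i + L%:Z * dx%:Z * dy%:Z * i * j)%R.
rewrite hi hj !natrM !rmorphD !rmorphM /= -hza -hzb.
rewrite -[(L%:Z)%:~R]/(L%:R) -[(dx%:Z)%:~R]/(dx%:R) -[(dy%:Z)%:~R]/(dy%:R) /=.
ring.
Qed.

Lemma apx_add x y L a b : (0 < L)%N -> apx x L a -> apx y L b -> apx (adl_add x y) L (a + b).
Proof.
move=> L0 h1 h2; rewrite /apx /adl_add prednK //.
apply: cong_trans (modQ_cong _ L0) _; exact: congD.
Qed.

Lemma apx_opp x L a : (0 < L)%N -> apx x L a -> apx (adl_opp x) L (- a).
Proof.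
move=> L0 h1; rewrite /apx /adl_opp prednK //.
apply: cong_trans (modQ_cong _ L0) _; exact: congN.
Qed.

Lemma apx_ofQ q L : (0 < L)%N -> apx (ofQ q) L q.
Proof. by move=> L0; rewrite /apx /ofQ prednK //; apply: modQ_cong. Qed.

Lemma apx_mul x y L a b : adele x -> adele y -> (0 < L)%N ->
  apx x (L * adl_den y) a -> apx y (L * adl_den x) b -> apx (adl_mul x y) L (a * b).
Proof.
move=> ax ay L0 h1 h2; rewrite /apx /adl_mul prednK //.
apply: cong_trans (modQ_cong _ L0) _.
apply: (prodcong (dx := adl_den x) (dy := adl_den y)) => //; try exact: adl_den_gt0.
- apply: bd_apx ax (bd_den x) _ h1; exact: mulgt0 L0 (adl_den_gt0 y).
- apply: bd_apx ay (bd_den y) _ h2; exact: mulgt0 L0 (adl_den_gt0 x).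
Qed.

Lemma adele_crit z : (forall n, z n = modQ n.+1 (z n)) ->
  (forall n m, (n.+1 %| m.+1)%N -> exists r, apx z m.+1 r /\ apx z n.+1 r) -> adele z.
Proof.
move=> hr hc; split.
  by move=> n; rewrite hr; apply/andP; apply: modQ_range.
move=> n m nm; have [r [h1 h2]] := hc n m nm.
have h1' : cong n.+1 (z m) r by apply: cong_dvd h1.
exact: cong_trans h1' (cong_sym h2).
Qed.

Lemma adl_ext x y : adele x -> adele y ->
  (forall n, exists r, apx x n.+1 r /\ apx y n.+1 r) -> x = y.
Proof.
move=> ax ay h; apply: funext => n; have [r [h1 h2]] := h n.
apply: (cong_eq (L := n.+1)); try exact: adele_range.
exact: cong_trans h1 (cong_sym h2).
Qed.

Lemma modQ_idem L q : (0 < L)%N -> modQ L (modQ L q) = modQ L q.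
Proof. by move=> L0; apply: modQ_id; apply: modQ_range. Qed.

Lemma adele_add x y : adele x -> adele y -> adele (adl_add x y).
Proof.
move=> ax ay; apply: adele_crit => [n|n m nm]; first by rewrite /adl_add modQ_idem.
exists (x m + y m); split.
  by apply: apx_add => //; apply: apx_self.
by apply: apx_add => //; apply: (apx_big (L:=m.+1)).
Qed.

Lemma adele_opp x : adele x -> adele (adl_opp x).
Proof.
move=> ax; apply: adele_crit => [n|n m nm]; first by rewrite /adl_opp modQ_idem.
exists (- x m); split.
  by apply: apx_opp => //; apply: apx_self.
by apply: apx_opp => //; apply: (apx_big (L:=m.+1)).
Qed.

Lemma adele_ofQ q : adele (ofQ q).
Proof.
apply: adele_crit => [n|n m nm]; first by rewrite /ofQ modQ_idem.
by exists q; split; apply: apx_ofQ.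
Qed.

Lemma adele_mul x y : adele x -> adele y -> adele (adl_mul x y).
Proof.
move=> ax ay; apply: adele_crit => [n|n m nm]; first by rewrite /adl_mul modQ_idem.
set dx := adl_den x; set dy := adl_den y.
have dx0 : (0 < dx)%N := adl_den_gt0 x. have dy0 : (0 < dy)%N := adl_den_gt0 y.
exists (x (m.+1 * dy).-1 * y (m.+1 * dx).-1); split.
  by apply: apx_mul => //; apply: apx_self.
apply: apx_mul => //; apply: apx_big => //; rewrite ?muln_gt0 //; exact: dvdn_mul.
Qed.

Lemma bd_mul x y Dx Dy : adele x -> adele y -> bd x Dx -> bd y Dy -> bd (adl_mul x y) (Dx * Dy).
Proof.
move=> ax ay hx hy; have [Dx0 _] := hx; have [Dy0 _] := hy.
set a := x (1 * adl_den y).-1; set b := y (1 * adl_den x).-1.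
have h := apx_mul ax ay (ltn0Sn 0) (apx_self _ _) (apx_self _ _).
apply: (bd_of (r := a * b)); first exact: mulgt0.
  rewrite natrM (mulrACA); apply: in_ZM.
    by apply: bd_apx ax hx _ (apx_self _ _); rewrite mul1n adl_den_gt0.
  by apply: bd_apx ay hy _ (apx_self _ _); rewrite mul1n adl_den_gt0.
exact: h.
Qed.

Lemma bd_add x y Dx Dy : bd x Dx -> bd y Dy -> bd (adl_add x y) (Dx * Dy).
Proof.
move=> [Dx0 hx] [Dy0 hy].
have h := apx_add (ltn0Sn 0) (apx_self x 1) (apx_self y 1).
apply: (bd_of (r := x 0%N + y 0%N)); first exact: mulgt0.
  rewrite natrM mulrDr; apply: in_ZD.
    by rewrite mulrAC; apply: in_ZM => //; apply: in_Zn.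
  by rewrite -mulrA; apply: in_ZM => //; apply: in_Zn.
exact: h.
Qed.

Lemma dvd_of (m n k : nat) : n = (k * m)%N -> (m %| n)%N.
Proof. by move=> ->; apply: dvdn_mull. Qed.

Definition A := {x : adl | adele x}.
HB.instance Definition _ := gen_eqMixin A.
HB.instance Definition _ := gen_choiceMixin A.

Definition Aadd (x y : A) : A := exist _ _ (adele_add (svalP x) (svalP y)).
Definition Aopp (x : A) : A := exist _ _ (adele_opp (svalP x)).
Definition Amul (x y : A) : A := exist _ _ (adele_mul (svalP x) (svalP y)).
Definition AQ (q : rat) : A := exist _ _ (adele_ofQ q).
Definition A0 := AQ 0.
Definition A1 := AQ 1.

Lemma A_eq (x y : A) : sval x = sval y -> x = y.
Proof.
case: x => x hx; case: y => y hy /= e; subst y.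
by rewrite (Prop_irrelevance hx hy).
Qed.

Lemma A_ext (x y : A) : (forall n, exists r, apx (sval x) n.+1 r /\ apx (sval y) n.+1 r) -> x = y.
Proof. by move=> h; apply: A_eq; apply: adl_ext => //; apply: svalP. Qed.

Notation dn x := (adl_den (sval x)).
Notation av x := (sval x).

Lemma Aden_gt0 (x : A) : (0 < dn x)%N. Proof. exact: adl_den_gt0. Qed.

Lemma Abig (x : A) L K : (0 < L)%N -> (K %| L)%N -> apx (av x) K (av x L.-1).
Proof.
move=> L0 KL; apply: apx_big => //; first exact: svalP.
by case: K KL => //; rewrite dvd0n => /eqP e; move: L0; rewrite e.
Qed.

Lemma dn_mul (x y : A) : (dn (Amul x y) %| dn x * dn y)%N.
Proof. by apply: bd_dvd; apply: bd_mul; try apply: svalP; apply: bd_den. Qed.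

Lemma dn_add (x y : A) : (dn (Aadd x y) %| dn x * dn y)%N.
Proof. by apply: bd_dvd; apply: bd_add; apply: bd_den. Qed.

Ltac dvtac := first [ by apply: dvdn_mul | by apply: dvdn_mull | by apply: dvdn_mulr
   | apply/dvdnP; eexists; ring ].

Lemma AaddC (x y : A) : Aadd x y = Aadd y x.
Proof.
apply: A_ext => n; exists (av x n + av y n); split.
  by apply: apx_add => //; apply: apx_self.
by rewrite addrC; apply: apx_add => //; apply: apx_self.
Qed.
Lemma AaddA (x y z : A) : Aadd x (Aadd y z) = Aadd (Aadd x y) z.
Proof.
apply: A_ext => n; exists (av x n + av y n + av z n); split.
  rewrite -addrA; apply: apx_add => //; first exact: apx_self.
  by apply: apx_add => //; apply: apx_self.
apply: apx_add => //; last exact: apx_self.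
by apply: apx_add => //; apply: apx_self.
Qed.

Lemma Aadd0 (x : A) : Aadd A0 x = x.
Proof.
apply: A_ext => n; exists (av x n); split; last exact: apx_self.
by rewrite -[X in apx _ _ X]add0r; apply: apx_add => //; [apply: apx_ofQ | apply: apx_self].
Qed.

Lemma AaddN (x : A) : Aadd x (Aopp x) = A0.
Proof.
apply: A_ext => n; exists 0; split; last exact: apx_ofQ.
rewrite -(subrr (av x n)); apply: apx_add => //; first exact: apx_self.
by apply: apx_opp => //; apply: apx_self.
Qed.

Lemma AmulC (x y : A) : Amul x y = Amul y x.
Proof.
apply: A_ext => n; set L := n.+1; set Lb := (L * dn x * dn y)%N.
have Lb0 : (0 < Lb)%N by rewrite /Lb !muln_gt0 !Aden_gt0.
exists (av x Lb.-1 * av y Lb.-1); split; last rewrite mulrC.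
  apply: apx_mul => //; try apply: svalP; apply: Abig => //; rewrite /Lb.
    by apply: (dvd_of (k := dn x)); ring.
  by apply: (dvd_of (k := dn y)); ring.
apply: apx_mul => //; try apply: svalP; apply: Abig => //; rewrite /Lb.
  by apply: (dvd_of (k := dn y)); ring.
by apply: (dvd_of (k := dn x)); ring.
Qed.

Lemma AmulA (x y z : A) : Amul x (Amul y z) = Amul (Amul x y) z.
Proof.
apply: A_ext => n; set L := n.+1; set Lb := (L * dn x * dn y * dn z)%N.
have L0 : (0 < L)%N by [].
have Lb0 : (0 < Lb)%N by rewrite /Lb !muln_gt0 !Aden_gt0.
exists (av x Lb.-1 * av y Lb.-1 * av z Lb.-1); split; last first.
  apply: apx_mul => //; try apply: svalP.
    apply: apx_mul => //; try apply: svalP; try (by rewrite ?muln_gt0 ?Aden_gt0); apply: Abig => //; rewrite /Lb.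
      by apply: (dvd_of (k := dn x)); ring.
    by apply: (dvd_of (k := dn y)); ring.
  apply: Abig => //; apply: (dvdn_trans (dvdn_mul (dvdnn L) (dn_mul x y))).
  by rewrite /Lb; apply: (dvd_of (k := dn z)); ring.
rewrite -mulrA; apply: apx_mul => //; try apply: svalP.
  apply: Abig => //; apply: (dvdn_trans (dvdn_mul (dvdnn L) (dn_mul y z))).
  by rewrite /Lb; apply: (dvd_of (k := dn x)); ring.
apply: apx_mul => //; try apply: svalP; try (by rewrite ?muln_gt0 ?Aden_gt0); apply: Abig => //; rewrite /Lb.
  by apply: (dvd_of (k := dn y)); ring.
by apply: (dvd_of (k := dn z)); ring.
Qed.

Lemma Amul1 (x : A) : Amul A1 x = x.
Proof.
apply: A_ext => n; set L := n.+1; set Lb := (L * dn A1 * dn x)%N.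
have Lb0 : (0 < Lb)%N by rewrite /Lb !muln_gt0 !Aden_gt0.
exists (av x Lb.-1); split; last first.
  by apply: Abig => //; rewrite /Lb; apply: (dvd_of (k := (dn A1 * dn x)%N)); ring.
rewrite -[X in apx _ _ X]mul1r; apply: apx_mul => //; try apply: svalP.
  by apply: apx_ofQ; rewrite ?muln_gt0 ?Aden_gt0.
by apply: Abig => //; rewrite /Lb; apply: (dvd_of (k := dn x)); ring.
Qed.

Lemma AmulDl (x y z : A) : Amul (Aadd x y) z = Aadd (Amul x z) (Amul y z).
Proof.
apply: A_ext => n; set L := n.+1; set Lb := (L * dn x * dn y * dn z)%N.
have L0 : (0 < L)%N by [].
have Lb0 : (0 < Lb)%N by rewrite /Lb !muln_gt0 !Aden_gt0.
set a := av x Lb.-1; set b := av y Lb.-1; set c := av z Lb.-1.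
have hx : apx (av x) (L * dn z) a.
  by apply: Abig => //; rewrite /Lb; apply: (dvd_of (k := (dn x * dn y)%N)); ring.
have hy : apx (av y) (L * dn z) b.
  by apply: Abig => //; rewrite /Lb; apply: (dvd_of (k := (dn x * dn y)%N)); ring.
exists ((a + b) * c); split.
  apply: apx_mul => //; try apply: svalP.
    by apply: apx_add => //; rewrite ?muln_gt0 ?Aden_gt0.
  apply: Abig => //; apply: (dvdn_trans (dvdn_mul (dvdnn L) (dn_add x y))).
  by rewrite /Lb; apply: (dvd_of (k := dn z)); ring.
rewrite mulrDl; apply: apx_add => //.
  apply: apx_mul => //; try apply: svalP.
  by apply: Abig => //; rewrite /Lb; apply: (dvd_of (k := (dn y * dn z)%N)); ring.
apply: apx_mul => //; try apply: svalP.
by apply: Abig => //; rewrite /Lb; apply: (dvd_of (k := (dn x * dn z)%N)); ring.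
Qed.

Lemma AaddNl (x : A) : Aadd (Aopp x) x = A0.
Proof. by rewrite AaddC AaddN. Qed.

Lemma A1_neq0 : A1 != A0.
Proof.
apply/eqP => /(f_equal (fun u => sval u 1%N)) /=; rewrite /ofQ.
by rewrite !modQ_id.
Qed.

HB.instance Definition _ := GRing.isZmodule.Build A AaddA AaddC Aadd0 AaddNl.
HB.instance Definition _ := GRing.Zmodule_isComNzRing.Build A AmulA AmulC Amul1 AmulDl A1_neq0.

Lemma AaddE (x y : A) : sval (x + y) = adl_add (sval x) (sval y). Proof. by []. Qed.
Lemma AmulE (x y : A) : sval (x * y) = adl_mul (sval x) (sval y). Proof. by []. Qed.
Lemma AoppE (x : A) : sval (- x) = adl_opp (sval x). Proof. by []. Qed.
Lemma A0E : sval (0 : A) = adl0. Proof. by []. Qed.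
Lemma A1E : sval (1 : A) = adl1. Proof. by []. Qed.


Lemma AQ_add a b : AQ (a + b) = AQ a + AQ b.
Proof.
apply: A_ext => n; exists (a + b); split; first exact: apx_ofQ.
by apply: apx_add => //; apply: apx_ofQ.
Qed.

Lemma AQ_opp a : AQ (- a) = - AQ a.
Proof.
apply: A_ext => n; exists (- a); split; first exact: apx_ofQ.
by apply: apx_opp => //; apply: apx_ofQ.
Qed.

Lemma AQ_mul a b : AQ (a * b) = AQ a * AQ b.
Proof.
apply: A_ext => n; exists (a * b); split; first exact: apx_ofQ.
apply: apx_mul => //; try apply: adele_ofQ; apply: apx_ofQ;
  by rewrite muln_gt0 adl_den_gt0.
Qed.

Lemma AQ_sub a b : AQ (a - b) = AQ a - AQ b.
Proof. by rewrite AQ_add AQ_opp. Qed.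

Lemma AQ1 : AQ 1 = 1. Proof. by []. Qed.
Lemma AQ0 : AQ 0 = 0. Proof. by []. Qed.

Definition mk (a b c d : A) : mat2 := M2 (sval a) (sval b) (sval c) (sval d).

Lemma mmul_mk a b c d a' b' c' d' :
  mmul (mk a b c d) (mk a' b' c' d') =
  mk (a * a' + b * c') (a * b' + b * d') (c * a' + d * c') (c * b' + d * d').
Proof. by []. Qed.

Lemma mdet_mk a b c d : mdet (mk a b c d) = sval (a * d - b * c).
Proof. by []. Qed.

Lemma mk_inj a b c d a' b' c' d' : mk a b c d = mk a' b' c' d' ->
  [/\ a = a', b = b', c = c' & d = d'].
Proof. by case => /A_eq -> /A_eq -> /A_eq -> /A_eq ->. Qed.

Lemma mat1_mk : mat1 = mk 1 0 0 1. Proof. by []. Qed.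
Lemma nmat_mk t : nmat (sval t) = mk 1 t 0 1. Proof. by []. Qed.
Lemma wmat_mk c : wmat c = mk 0 (- AQ (c ^- 2)) 1 0. Proof. by []. Qed.
Lemma amat_mk y : amat y = mk (AQ y) 0 0 1. Proof. by []. Qed.

Lemma madele_mk a b c d : madele (mk a b c d).
Proof. by split; [|split; [|split]]; apply: svalP. Qed.

Lemma mat_mk g : madele g -> exists a b c d, g = mk a b c d.
Proof.
case: g => g11 g12 g21 g22 [h1 [h2 [h3 h4]]].
by exists (exist _ _ h1), (exist _ _ h2), (exist _ _ h3), (exist _ _ h4).
Qed.

Lemma unitP (x : A) : (exists y : A, x * y = 1) -> adl_unit (sval x).
Proof. by case=> y e; exists (sval y); split; [apply: svalP | rewrite -AmulE e]. Qed.

Lemma unitP' (x : A) : adl_unit (sval x) -> exists y : A, x * y = 1.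
Proof.
case=> y [ay e]; exists (exist _ _ ay); apply: A_eq; exact: e.
Qed.

Lemma GL2_mk a b c d : (exists y : A, (a * d - b * c) * y = 1) -> GL2 (mk a b c d).
Proof. by move=> h; split; [apply: madele_mk | rewrite mdet_mk; apply: unitP]. Qed.

Definition Zi (x : A) := integral (sval x).
Definition inM (M : nat) (x : A) := in_MZhat M (sval x).

Lemma Zi_bd x : Zi x <-> bd (sval x) 1.
Proof.
rewrite /Zi /integral /bd; split.
  by move=> ->; rewrite mulr0.
move=> [_ h]; rewrite mul1r in h.
apply: (cong_eq (L := 1)); first exact: adele_range (svalP x).
  by rewrite lexx ltr01.
by apply/cong1P; rewrite subr0.
Qed.

Lemma bd_opp x D : adele x -> bd x D -> bd (adl_opp x) D.
Proof.
move=> ax [D0 h]; apply: (bd_of (r := - x 0%N)) => //.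
  by rewrite mulrN; apply: in_ZN.
by apply: (apx_opp (L := 1)) => //; apply: apx_self.
Qed.

Lemma Zi_add x y : Zi x -> Zi y -> Zi (x + y).
Proof. by move=> /Zi_bd hx /Zi_bd hy; apply/Zi_bd; have := bd_add hx hy. Qed.
Lemma Zi_mul x y : Zi x -> Zi y -> Zi (x * y).
Proof.
move=> /Zi_bd hx /Zi_bd hy; apply/Zi_bd.
by have := bd_mul (svalP x) (svalP y) hx hy.
Qed.
Lemma Zi_opp x : Zi x -> Zi (- x).
Proof. by move=> /Zi_bd hx; apply/Zi_bd; apply: bd_opp => //; apply: svalP. Qed.
Lemma Zi_sub x y : Zi x -> Zi y -> Zi (x - y).
Proof. by move=> hx hy; apply: Zi_add => //; apply: Zi_opp. Qed.
Lemma Zi_int (z : int) : Zi (AQ z%:~R).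
Proof.
rewrite /Zi /integral /= /ofQ.
have -> : modQ 1 z%:~R = modQ 1 0.
  by apply: modQ_eq => //; apply/cong1P; rewrite subr0; apply: in_Z_int.
by rewrite modQ_id // lexx ltr01.
Qed.

Lemma Zi0 : Zi 0. Proof. exact: (Zi_int 0). Qed.
Lemma Zi1 : Zi 1. Proof. exact: (Zi_int 1). Qed.

Lemma inM_apx M (x : A) : (0 < M)%N -> inM M x <-> apx (sval x) M 0.
Proof.
move=> M0; rewrite /inM /in_MZhat /apx; split.
  by move=> ->; apply: cong_refl.
move=> h; apply: (cong_eq (L := M)) => //.
  by have := adele_range M.-1 (svalP x); rewrite prednK.
by rewrite lexx ltr0n.
Qed.

Lemma inM_dvd M K (x : A) : (0 < M)%N -> (K %| M)%N -> (0 < K)%N -> inM M x -> inM K x.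
Proof.
move=> M0 KM K0 /(inM_apx _ M0) h; apply/(inM_apx _ K0).
exact: apx_dvd (svalP x) M0 KM K0 h.
Qed.

Lemma inM_Zi M (x : A) : (0 < M)%N -> inM M x -> Zi x.
Proof. by move=> M0 h; have := inM_dvd M0 (dvd1n M) (ltn0Sn 0) h. Qed.

Lemma inM_opp M (x : A) : (0 < M)%N -> inM M x -> inM M (- x).
Proof.
move=> M0 /(inM_apx _ M0) h; apply/(inM_apx _ M0).
by rewrite -oppr0; apply: apx_opp.
Qed.

Lemma inM0 M : (0 < M)%N -> inM M 0.
Proof. by move=> M0; apply/(inM_apx _ M0); apply: apx_ofQ. Qed.

Lemma inM_N M : (0 < M)%N -> inM M (AQ M%:R).
Proof.
move=> M0; apply/(inM_apx _ M0).
apply: cong_trans (apx_ofQ _ M0) _; apply/(congP _ _ M0); exists 1.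
by rewrite add0r mulr1.
Qed.

Lemma Zhat_unit_mk (x : A) : Zi x -> (exists y, Zi y /\ x * y = 1) -> Zhat_unit (sval x).
Proof.
move=> hx [y [hy e]]; split => //; exists (sval y); split; first exact: svalP.
by split => //; rewrite -AmulE e.
Qed.

Lemma Zhat_unit_inv (x : A) : Zhat_unit (sval x) -> exists y, Zi y /\ x * y = 1.
Proof.
case=> _ [y [ay [iy e]]]; exists (exist _ _ ay); split => //.
by apply: A_eq; exact: e.
Qed.

Lemma Kmax_mk (a b c d : A) : Zi a -> Zi b -> Zi c -> Zi d ->
  (exists v, Zi v /\ (a * d - b * c) * v = 1) -> Kmax (mk a b c d).
Proof.
move=> ha hb hc hd hv; split; first exact: madele_mk.
do 4! (split => //).
rewrite mdet_mk; apply: Zhat_unit_mk => //.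
by apply: Zi_sub; apply: Zi_mul.
Qed.

Lemma Kmax_inv k : Kmax k -> exists a b c d v, k = mk a b c d /\
  [/\ Zi a, Zi b, Zi c & Zi d] /\ Zi v /\ (a * d - b * c) * v = 1.
Proof.
case=> hm [h1 [h2 [h3 [h4 hu]]]].
have [a [b [c [d e]]]] := mat_mk hm; subst k.
rewrite mdet_mk in hu; have [v [hv ev]] := Zhat_unit_inv hu.
by exists a, b, c, d, v.
Qed.

Lemma KN_mk N (a b c d : A) : Kmax (mk a b c d) -> inM N (a - 1) -> inM N b ->
  inM N c -> inM N (d - 1) -> KN N (mk a b c d).
Proof. by move=> *; split => //; do 3! split => //. Qed.

Lemma center_mk (u : A) : (exists v, u * v = 1) -> center (mk u 0 0 u).
Proof. by move=> h; exists (sval u); split; [apply: svalP | split => //; apply: unitP]. Qed.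

Lemma center_inv z : center z -> exists u v, z = mk u 0 0 u /\ u * v = 1.
Proof.
case=> u [au [hu e]]; subst z.
have [v ev] := unitP' (x := exist _ _ au) hu.
by exists (exist _ _ au), v.
Qed.

Lemma KN_n N (u : A) : (0 < N)%N -> inM N u -> KN N (mk 1 u 0 1).
Proof.
move=> N0 hu; apply: KN_mk; rewrite ?subrr; try exact: inM0 => //.
apply: Kmax_mk; try exact: Zi0; try exact: Zi1; first exact: inM_Zi hu.
  by exists 1; split; [exact: Zi1 | ring].
exact: hu.
Qed.

Section Trig.
Variable R : realType.

Lemma e_D (x y : R) : e_ (x + y) = e_ x * e_ y.
Proof.
rewrite /e_ mulrDr cosD sinD /GRing.mul /=.
by congr Complex; rewrite /GRing.mul /=; ring.
Qed.

Lemma e_0 : e_ (0 : R) = 1.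
Proof. by rewrite /e_ mulr0 cos0 sin0. Qed.

Lemma e_1 : e_ (1 : R) = 1.
Proof.
by rewrite /e_ mulr1 -[2 * pi]/(2%:R * pi) mulr_natl cos2pi sin2pi.
Qed.

Lemma e_N (x : R) : e_ (- x) = (e_ x)^-1.
Proof.
have h : e_ x * e_ (- x) = 1 by rewrite -e_D subrr e_0.
have hu : e_ x != 0 by apply/eqP => e; move: h; rewrite e mul0r => /eqP; rewrite eq_sym oner_eq0.
by rewrite -[e_ (- x)]mul1r -(mulVf hu) -mulrA h mulr1.
Qed.

Lemma e_nat (n : nat) : e_ (n%:R : R) = 1.
Proof. by elim: n => [|n IH]; rewrite ?e_0 // -addn1 natrD e_D IH e_1 mulr1. Qed.

Lemma e_int (z : int) : e_ (z%:~R : R) = 1.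
Proof.
case: z => n; first by rewrite -[_%:~R]/(n%:R : R) e_nat.
by rewrite NegzE rmorphN /= e_N -[_%:~R]/(n.+1%:R : R) e_nat invr1.
Qed.

Definition ee (r : rat) : R[i] := e_ (ratr r).

Lemma eeD a b : ee (a + b) = ee a * ee b.
Proof. by rewrite /ee rmorphD e_D. Qed.

Lemma ee_int (z : int) : ee z%:~R = 1.
Proof. by rewrite /ee ratr_int e_int. Qed.

Lemma ee0 : ee 0 = 1. Proof. exact: (ee_int 0). Qed.

Lemma ee_shift a (z : int) : ee (a + z%:~R) = ee a.
Proof. by rewrite eeD ee_int mulr1. Qed.

Lemma ee_modQ r : e_ (ratr (modQ 1 r) : R) = ee r.
Proof.
have -> : modQ 1 r = r + (- Num.floor (r / 1))%:~R by rewrite /modQ mul1r mulrNz.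
exact: ee_shift.
Qed.

Lemma ee_X x (j : nat) : ee x ^+ j = ee (j%:R * x).
Proof.
elim: j => [|j IH]; first by rewrite expr0 mul0r ee0.
by rewrite exprS IH -eeD -addn1 natrD mulrDl mul1r addrC.
Qed.

End Trig.

Section Trig2.
Variable R : realType.

Lemma ee_neq1 (b n : nat) : (0 < b)%N -> (b < n)%N -> ee R (b%:R / n%:R) != 1.
Proof.
move=> b0 bn; apply/eqP; rewrite /ee /e_ => e.
have hc : cos (2 * pi * ratr (b%:R / n%:R : rat)) = 1 :> R by case: e.
set t : R := ratr _ in hc.
have t0 : 0 < t.
  by rewrite /t ltr0q divr_gt0 // ltr0n //; apply: leq_ltn_trans bn.
have t1 : t < 1.
  rewrite /t -(rmorph1 (ratr : rat -> R)) ltr_rat ltr_pdivrMr ?mul1r ?ltr_nat //.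
  by rewrite ltr0n; apply: leq_ltn_trans bn.
clearbody t.
have e2 : 2 * pi * t = (pi * t) *+ 2 by rewrite -mulrA mulr_natl.
rewrite e2 cos_mulr2n in hc.
have hs : sin (pi * t) ^+ 2 = 0.
  rewrite sin2cos2; move: hc; rewrite mulr2n; set u := cos _ ^+ 2; lra.
have : 0 < sin (pi * t).
  apply: sin_gt0_pi; rewrite mulr_gt0 ?pi_gt0 //= -[X in _ < X]mulr1 ltr_pM2l //.
  exact: pi_gt0.
by move: hs => /eqP; rewrite expf_eq0 /= => /eqP ->; rewrite ltxx.
Qed.

Lemma natC_neq0 (n : nat) : (0 < n)%N -> (n%:R : R[i]) != 0.
Proof. by move=> n0; rewrite pnatr_eq0 -lt0n. Qed.

Lemma geom0 (w : R[i]) (n : nat) : w != 1 -> w ^+ n = 1 -> \sum_(j < n) w ^+ j = 0.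
Proof.
move=> w1 wn; have := subrX1 w n; rewrite wn subrr => /esym /eqP.
by rewrite mulf_eq0 subr_eq0 (negbTE w1) /= => /eqP.
Qed.

Lemma orth (n k a : nat) : (k < n)%N -> (a < n)%N ->
  \sum_(j < n) ee R (j%:R * (k%:R - a%:R) / n%:R) = (k == a)%:R * n%:R.
Proof.
move=> kn an; have n0 : (0 < n)%N by apply: leq_ltn_trans kn.
have nQ : (n%:R : rat) != 0 by rewrite pnatr_eq0 -lt0n.
case: (eqVneq k a) => [->|ne].
  under eq_bigr => j _ do rewrite subrr mulr0 mul0r ee0.
  by rewrite sumr_const card_ord mul1r.
rewrite mul0r.
pose b := if (a < k)%N then (k - a)%N else (k + n - a)%N.
pose c : int := if (a < k)%N then 0 else 1.
have hb : (k%:R - a%:R) / n%:R = b%:R / n%:R - c%:~R :> rat.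
  rewrite /b /c; case: ltnP => ak.
    by rewrite natrB ?mulr0z ?subr0 // ltnW.
  rewrite natrB; last by apply: leq_trans (leq_addl _ _); apply: ltnW.
  rewrite natrD mulr1z; field; exact: nQ.
have ne' : k <> a by apply/eqP.
have b0 : (0 < b)%N by rewrite /b; case: (ltnP a k) => ak; lia.
have bn : (b < n)%N by rewrite /b; case: (ltnP a k) => ak; lia.
have hj : forall j : nat, ee R (j%:R * (k%:R - a%:R) / n%:R) = (ee R (b%:R / n%:R)) ^+ j.
  move=> j; rewrite ee_X -mulrA hb mulrBr.
  have -> : j%:R * c%:~R = ((j%:Z * c)%:~R : rat) by rewrite intrM -pmulrn.
  by rewrite -mulrNz ee_shift.
under eq_bigr => j _ do rewrite hj.
apply: geom0; first exact: ee_neq1.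
by rewrite ee_X mulrC divfK ?pnatr_eq0 -?lt0n // -[b%:R]/((b%:Z)%:~R) ee_int.
Qed.

Lemma fourier1 (n : nat) (h : nat -> R[i]) : (0 < n)%N ->
  (forall j, (j < n)%N -> \sum_(k < n) h k * ee R (j%:R * k%:R / n%:R) = 0) ->
  forall a, (a < n)%N -> h a = 0.
Proof.
move=> n0 H a an.
have e1 : \sum_(k < n) h k * ((k == a :> nat)%:R * n%:R) = h a * n%:R.
  rewrite (bigD1 (Ordinal an)) //= eqxx mul1r big1 ?addr0 // => i ne.
  by rewrite (_ : (i == a :> nat) = false) ?mul0r ?mulr0 //; apply/negbTE; move: ne; apply: contra => /eqP e; apply/eqP/val_inj.
have e2 : \sum_(k < n) h k * ((k == a :> nat)%:R * n%:R) = 0.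
  under eq_bigr => k _ do rewrite -(orth (ltn_ord k) an) big_distrr.
  rewrite exchange_big /= big1 // => j _.
  transitivity ((\sum_(i < n) h i * ee R (j%:R * i%:R / n%:R)) * ee R (- (j%:R * a%:R / n%:R))).
    rewrite big_distrl; apply: eq_bigr => i _ /=; rewrite -[RHS]mulrA -eeD; congr (_ * ee R _).
    ring.
  by rewrite H ?mul0r.
move: e2; rewrite e1 => /eqP; rewrite mulf_eq0 (negbTE (natC_neq0 n0)) orbF.
by move/eqP.
Qed.

End Trig2.

Definition Gm (C t1 t2 : A) := mk (- t1) (- C - t1 * t2) 1 t2.

Lemma G_eq c (t1 t2 : A) :
  mmul (nmat (adl_opp (sval t1))) (mmul (wmat c) (nmat (sval t2))) = Gm (AQ (c ^- 2)) t1 t2.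
Proof.
rewrite (_ : adl_opp (sval t1) = sval (- t1)) // !nmat_mk wmat_mk !mmul_mk /Gm.
by congr mk; ring.
Qed.

Lemma CunitL (c : rat) : c != 0 -> AQ (c ^- 2) * AQ (c ^+ 2) = 1.
Proof. by move=> c0; rewrite -AQ_mul mulVf ?expf_neq0. Qed.

Lemma GL2_G c t1 t2 : c != 0 -> GL2 (Gm (AQ (c ^- 2)) t1 t2).
Proof.
move=> c0; apply: GL2_mk; exists (AQ (c ^+ 2)); rewrite -[RHS](CunitL c0); ring.
Qed.

Lemma phi_inv (R : realType) (f : mat2 -> R[i]) N c (t1 t2 u1 u2 : A) :
  (0 < N)%N -> bi_inv (KN N) f -> c != 0 -> inM N u1 -> inM N u2 ->
  f (Gm (AQ (c ^- 2)) (t1 + u1) (t2 + u2)) = f (Gm (AQ (c ^- 2)) t1 t2).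
Proof.
move=> N0 hbi c0 h1 h2.
have -> : Gm (AQ (c ^- 2)) (t1 + u1) (t2 + u2) =
    mmul (mk 1 (- u1) 0 1) (mmul (Gm (AQ (c ^- 2)) t1 t2) (mk 1 u2 0 1)).
  by rewrite /Gm !mmul_mk; congr mk; ring.
apply: hbi; [exact: GL2_G | apply: KN_n => //; exact: inM_opp | exact: KN_n].
Qed.

Lemma alg (T : comNzRingType) (t1 t2 C u k11 k12 k21 k22 yi yy v : T) :
  yi * yy = 1 -> (k11 * k22 - k12 * k21) * v = 1 ->
  - t1 = yi * u * k11 * yy -> - C - t1 * t2 = yi * u * k12 -> 1 = u * k21 * yy ->
  t2 = u * k22 ->
  t1 = C * yy * (- (v * k21 * k11)) /\ t2 = C * yy * (v * k21 * k22).
Proof.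
move=> hyy hdk e11 e12 e21 e22.
have hC : C = yi * yy * u ^+ 2 * (k11 * k22 - k12 * k21).
  transitivity ((- t1) * t2 - (- C - t1 * t2) * (u * k21 * yy)); first by rewrite -e21; ring.
  by rewrite e12 e11 e22; ring.
have u2 : u ^+ 2 = C * v.
  transitivity (u ^+ 2 * (yi * yy) * ((k11 * k22 - k12 * k21) * v)); first by rewrite hyy hdk; ring.
  by rewrite hC; ring.
have hu : u = C * v * k21 * yy.
  transitivity (u * (u * k21 * yy)); first by rewrite -e21; ring.
  transitivity (u ^+ 2 * (k21 * yy)); first ring.
  by rewrite u2; ring.
split.
  transitivity (- (yi * u * k11 * yy)); first by rewrite -e11; ring.
  transitivity (- (u * k11) * (yi * yy)); first ring.
  by rewrite hyy hu; ring.
by rewrite e22 hu; ring.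
Qed.

Lemma supp (R : realType) (f : mat2 -> R[i]) (c y : rat) (t1 t2 : A) :
  c != 0 -> y != 0 ->
  (forall g, GL2 g -> f g != 0 -> exists z k, center z /\ Kmax k /\
        g = mmul (amat y^-1) (mmul z (mmul k (amat y)))) ->
  f (Gm (AQ (c ^- 2)) t1 t2) != 0 ->
  exists w1 w2, [/\ Zi w1, Zi w2, t1 = AQ (c ^- 2 * y) * w1 & t2 = AQ (c ^- 2 * y) * w2].
Proof.
move=> c0 y0 hs hf.
have [z [k [hz [hk e]]]] := hs _ (GL2_G t1 t2 c0) hf.
have [u [v [ez uv]]] := center_inv hz.
have [a [b [cc [d [w [ek [[ha hb hc hd] [hw dw]]]]]]]] := Kmax_inv hk.
subst z k; rewrite !amat_mk !mmul_mk /Gm in e.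
have [e11 e12 e21 e22] := mk_inj e.
have hyy : AQ y^-1 * AQ y = 1 by rewrite -AQ_mul mulVf.
have e11' : - t1 = AQ y^-1 * u * a * AQ y by rewrite e11; ring.
have e12' : - AQ (c ^- 2) - t1 * t2 = AQ y^-1 * u * b by rewrite e12; ring.
have e21' : 1 = u * cc * AQ y by rewrite e21; ring.
have e22' : t2 = u * d by rewrite e22; ring.
have [h1 h2] := alg hyy dw e11' e12' e21' e22'.
exists (- (w * cc * a)), (w * cc * d); split.
- by apply: Zi_opp; repeat apply: Zi_mul.
- by repeat apply: Zi_mul.
- by rewrite AQ_mul.
- by rewrite AQ_mul.
Qed.

Lemma invD (q : rat) (D : nat) (w : A) : (0 < D)%N -> Zi w -> in_Z (D%:R * q) ->
  in_invDZhat D (sval (AQ q * w)).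
Proof.
move=> D0 hw hq; rewrite /in_invDZhat.
set b := sval w (1 * dn (AQ q)).-1.
have h : apx (sval (AQ q * w)) 1 (q * b).
  apply: apx_mul => //; try apply: svalP; last exact: apx_self.
  by apply: apx_ofQ; rewrite mul1n adl_den_gt0.
have L0 : (0 < 1 * dn (AQ q))%N by rewrite mul1n adl_den_gt0.
have hb : in_Z b.
  have hh : in_Z (1%:R * b) := bd_apx (svalP w) (proj1 (Zi_bd w) hw) L0 (apx_self _ _).
  by move: hh; rewrite mulr1n mul1r.
move: h; rewrite /apx /= => /cong1P h.
move: (adl_mul (ofQ q) (av w) 0%N) h => X h; clearbody b.
have -> : D%:R * X = D%:R * q * b + D%:R * (X - q * b) by ring.
by apply: in_ZD; apply: in_ZM => //; apply: in_Zn.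
Qed.


Lemma psi_eval (R : realType) (m1 m2 a b : rat) :
  psi_fin R (adl_sub (adl_mul (ofQ m1) (ofQ a)) (adl_mul (ofQ m2) (ofQ b))) = ee R (m1 * a - m2 * b).
Proof.
have -> : adl_sub (adl_mul (ofQ m1) (ofQ a)) (adl_mul (ofQ m2) (ofQ b)) = sval (AQ (m1 * a - m2 * b)).
  by rewrite AQ_sub !AQ_mul.
by rewrite /psi_fin /= ee_modQ.
Qed.


Lemma psi_shift (R : realType) (X W : A) : Zi W -> psi_fin R (sval (X + W)) = psi_fin R (sval X).
Proof.
rewrite /Zi /integral /psi_fin /= /adl_add => ->; rewrite addr0 modQ_id //.
exact: adele_range (svalP X).
Qed.


Lemma Zi_mulM (q : rat) (M : nat) (u : A) : (0 < M)%N -> inM M u -> in_Z (M%:R * q) ->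
  Zi (AQ q * u).
Proof.
move=> M0 /(inM_apx _ M0) hu hq.
have bq : bd (ofQ q) M.
  apply: (bd_of (r := q)) => //; exact: (apx_ofQ q (ltn0Sn 0)).
have h : apx (sval (AQ q * u)) 1 (q * 0).
  apply: apx_mul => //; try apply: svalP.
    by apply: apx_ofQ; rewrite mul1n adl_den_gt0.
  rewrite mul1n; apply: apx_dvd (svalP u) M0 (bd_dvd bq) (adl_den_gt0 _) hu.
apply/Zi_bd; split => //; rewrite mul1r.
by move: h; rewrite /apx /= mulr0 => /cong1P; rewrite subr0.
Qed.


Lemma inM_Mz M (z : int) : (0 < M)%N -> inM M (AQ (M%:R * z%:~R)).
Proof.
move=> M0; apply/(inM_apx _ M0).
apply: cong_trans (apx_ofQ _ M0) _; apply/(congP _ _ M0); exists z.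
by rewrite add0r.
Qed.


Lemma point_alg (s T C : A) : s * T = 1 -> - C - (- s) * s = 0 ->
  Gm C (- s) s = mmul (mk s 0 0 s) (mk 1 0 T 1).
Proof.
move=> hs hC; rewrite mmul_mk /Gm hC opprK.
by congr mk; rewrite ?hs; ring.
Qed.

Lemma KN_low N (T : A) : (0 < N)%N -> inM N T -> KN N (mk 1 0 T 1).
Proof.
move=> N0 hT; apply: KN_mk; rewrite ?subrr; try exact: inM0; last exact: hT.
apply: Kmax_mk; try exact: Zi0; try exact: Zi1.
  exact: inM_Zi N0 hT.
by exists 1; split; [exact: Zi1 | ring].
Qed.


Lemma point (R : realType) (f : mat2 -> R[i]) N (x : rat) :
  (0 < N)%N -> bi_inv (KN N) f ->
  (forall z g, center z -> GL2 g -> f (mmul z g) = f g) -> x * N%:R = 1 ->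
  f (Gm (AQ (x ^+ 2)) (AQ (- x)) (AQ x)) = f mat1.
Proof.
move=> N0 hbi hZ hx.
have hs : AQ x * AQ N%:R = 1 by rewrite -AQ_mul hx.
have hK := KN_low N0 (inM_N N0).
rewrite AQ_opp expr2 AQ_mul.
generalize (AQ x) (AQ N%:R) hs hK => s T hs' hK'.
have hC : - (s * s) - (- s) * s = 0 by ring.
rewrite (point_alg hs' hC).
have h1 : KN N mat1 by rewrite mat1_mk; apply: KN_n => //; exact: inM0.
have g1 : GL2 mat1 by rewrite mat1_mk; apply: GL2_mk; exists 1; ring.
rewrite hZ; last first.
- by apply: GL2_mk; exists 1; ring.
- by apply: center_mk; exists T.
have -> : mk 1 0 T 1 = mmul (mk 1 0 T 1) (mmul mat1 mat1).
  by rewrite mat1_mk !mmul_mk; congr mk; ring.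
exact: hbi.
Qed.

Lemma integrand_inv (R : realType) (f : mat2 -> R[i]) N c (m1 m2 : rat) (T1 T2 U1 U2 : A) :
  (0 < N)%N -> bi_inv (KN N) f -> c != 0 -> inM N U1 -> inM N U2 ->
  in_Z (N%:R * m1) -> in_Z (N%:R * m2) ->
  f (mmul (nmat (adl_opp (sval (T1 + U1)))) (mmul (wmat c) (nmat (sval (T2 + U2))))) *
    psi_fin R (adl_sub (adl_mul (ofQ m1) (sval (T1 + U1))) (adl_mul (ofQ m2) (sval (T2 + U2))))
  = f (mmul (nmat (adl_opp (sval T1))) (mmul (wmat c) (nmat (sval T2)))) *
    psi_fin R (adl_sub (adl_mul (ofQ m1) (sval T1)) (adl_mul (ofQ m2) (sval T2))).
Proof.
move=> N0 hbi c0 h1 h2 i1 i2.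
rewrite !G_eq (phi_inv T1 T2 N0 hbi c0 h1 h2); congr (_ * _).
have -> : adl_sub (adl_mul (ofQ m1) (sval (T1 + U1))) (adl_mul (ofQ m2) (sval (T2 + U2))) =
   sval ((AQ m1 * T1 - AQ m2 * T2) + (AQ m1 * U1 - AQ m2 * U2)).
  rewrite -[LHS]/(sval (AQ m1 * (T1 + U1) - AQ m2 * (T2 + U2))).
  by have -> : AQ m1 * (T1 + U1) - AQ m2 * (T2 + U2) = (AQ m1 * T1 - AQ m2 * T2) + (AQ m1 * U1 - AQ m2 * U2) :> A by ring.
rewrite psi_shift //.
by apply: Zi_sub; apply: (Zi_mulM (M := N)).
Qed.

Lemma integrand_supp (R : realType) (f : mat2 -> R[i]) (c y : rat) (m1 m2 : rat) (T1 T2 : A) (D : nat) :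
  c != 0 -> y != 0 ->
  (forall g, GL2 g -> f g != 0 -> exists z k, center z /\ Kmax k /\
        g = mmul (amat y^-1) (mmul z (mmul k (amat y)))) ->
  (0 < D)%N -> in_Z (D%:R * (c ^- 2 * y)) ->
  f (mmul (nmat (adl_opp (sval T1))) (mmul (wmat c) (nmat (sval T2)))) *
    psi_fin R (adl_sub (adl_mul (ofQ m1) (sval T1)) (adl_mul (ofQ m2) (sval T2))) != 0 ->
  in_invDZhat D (sval T1) /\ in_invDZhat D (sval T2).
Proof.
move=> c0 y0 hs D0 hD hne.
have hf : f (Gm (AQ (c ^- 2)) T1 T2) != 0.
  by rewrite -G_eq; apply: contraNneq hne => ->; rewrite mul0r.
have [w1 [w2 [z1 z2 e1 e2]]] := supp c0 y0 hs hf.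
by rewrite e1 e2; split; apply: invD.
Qed.

Theorem corollary3p8 (R : realType) (f : mat2 -> R[i]) (N : nat) (k : rat) :
  in_Hfin f -> has_level f N -> geom_i f -> geom_ii f ->
  f mat1 != 0 ->
  geom_conductor f k ->
  in_Z (N%:R / k).
Proof.
move=> hH hL _ hG f1 hk.
case: hH => hZ _; case: hL => N0 [hKN _]; case: hG => y [y0 hs]; case: hk => [[k0 hdiv] _].
apply: hdiv; split; first by rewrite ltr0n.
have c0 : (N%:R : rat) != 0 by rewrite pnatr_eq0 -lt0n.
have y0' : y != 0 by rewrite gt_eqF.
pose E := (N * `|denq y|)%N. pose D := (N * E)%N.
have E0 : (0 < E)%N by rewrite /E muln_gt0 N0 absz_gt0 denq_neq0.
have D0 : (0 < D)%N by rewrite /D muln_gt0 N0 E0.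
have hD : in_Z (D%:R * (N%:R ^- 2 * y)).
  have -> : D%:R * (N%:R ^- 2 * y) = (numq y)%:~R.
    rewrite numqE /D /E !natrM natr_absz gtr0_norm ?denq_gt0 //.
    field; exact: c0.
  exact: in_Z_int.
pose g (j1 j2 : nat) := (fun t1 t2 : adl => f (mmul (nmat (adl_opp t1)) (mmul (wmat N%:R) (nmat t2))) *
   psi_fin R (adl_sub (adl_mul (ofQ (j1%:R / N%:R)) t1) (adl_mul (ofQ (- (j2%:R / N%:R))) t2))).
pose S j1 j2 := \sum_(k1 < N * D) \sum_(k2 < N * D) g j1 j2 (ofQ (k1%:R / D%:R)) (ofQ (k2%:R / D%:R)).
have hK : forall j1 j2, Kloosterman f (j1%:R / N%:R) (- (j2%:R / N%:R)) N%:R ((N ^ 2)%:R^-1 * S j1 j2).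
  move=> j1 j2; exists N, D; split => //; split => //; split; last split => //.
    move=> t1 t2 u1 u2 a1 a2 b1 b2 hu1 hu2.
    have i1 : in_Z (N%:R * (j1%:R / N%:R)) by rewrite mulrC divfK //; apply: in_Zn.
    have i2 : in_Z (N%:R * (- (j2%:R / N%:R))) by rewrite mulrN mulrC divfK //; apply: in_ZN; apply: in_Zn.
    exact: (@integrand_inv R f N N%:R _ _ (exist _ t1 a1) (exist _ t2 a2)
         (exist _ u1 b1) (exist _ u2 b2) N0 hKN c0 hu1 hu2 i1 i2).
  move=> t1 t2 a1 a2 hne.
  exact: (@integrand_supp R f N%:R y _ _ (exist _ t1 a1) (exist _ t2 a2) D c0 y0' hs D0 hD hne).
have key : exists j1 j2, S j1 j2 != 0.
  have [h|nex] := pselect (exists j1 j2, S j1 j2 != 0); first exact: h.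
  have H0 : forall j1 j2, S j1 j2 = 0.
    move=> j1 j2; case: (eqVneq (S j1 j2) 0) => // ne; exfalso; apply: nex.
    by exists j1, j2.
  have [x hx] : {x : rat | x = N%:R^-1} by exists N%:R^-1.
  pose n := (N * D)%N.
  have n0 : (0 < n)%N by rewrite /n muln_gt0 N0 D0.
  have DQ : (D%:R : rat) != 0 by rewrite pnatr_eq0 -lt0n.
  have EQ : (E%:R : rat) != 0 by rewrite pnatr_eq0 -lt0n.
  have dQ : (`|denq y|%:R : rat) != 0 by rewrite pnatr_eq0 absz_eq0 denq_neq0.
  pose F (k1 k2 : nat) := f (mmul (nmat (adl_opp (ofQ (k1%:R / D%:R))))
     (mmul (wmat N%:R) (nmat (ofQ (k2%:R / D%:R))))).
  have hSF : forall j1 j2, S j1 j2 = \sum_(k1 < n) \sum_(k2 < n)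
      F k1 k2 * (ee R (j1%:R * k1%:R / n%:R) * ee R (j2%:R * k2%:R / n%:R)).
    move=> j1 j2; rewrite /S /n; apply: eq_bigr => k1 _; apply: eq_bigr => k2 _.
    rewrite /g /=.
    rewrite psi_eval -eeD; congr (_ * ee R _).
    rewrite /n natrM; field.
    by rewrite c0 DQ.
  pose a1 := (n - E)%N. pose a2 := (E %% n)%N.
  have a1n : (a1 < n)%N by rewrite /a1 ltn_subrL E0 n0.
  have a2n : (a2 < n)%N by rewrite /a2 ltn_mod n0.
  have hh1 : forall j2, (j2 < n)%N -> forall k1, (k1 < n)%N ->
      \sum_(k2 < n) F k1 k2 * ee R (j2%:R * k2%:R / n%:R) = 0.
    move=> j2 _; apply: (fourier1 (n := n) (h := fun k1 => \sum_(k2 < n) F k1 k2 * ee R (j2%:R * k2%:R / n%:R))) => // j1 _.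
    rewrite -[RHS](H0 j1 j2) hSF; apply: eq_bigr => k1 _; rewrite big_distrl; apply: eq_bigr => k2 _ /=.
    by rewrite mulrAC -mulrA.
  have hFa : F a1 a2 = 0.
    apply: (fourier1 (n := n) (h := fun k2 => F a1 k2)) => // j2 j2n; exact: hh1 j2 j2n a1 a1n.
  have eF : F a1 a2 = f (Gm (AQ (N%:R ^- 2)) (AQ (a1%:R / D%:R)) (AQ (a2%:R / D%:R))) :=
    congr1 f (G_eq N%:R (AQ (a1%:R / D%:R)) (AQ (a2%:R / D%:R))).
  have e1 : AQ (a1%:R / D%:R) = AQ (- x) + AQ (N%:R * 1%:~R).
    rewrite -AQ_add; congr AQ.
    rewrite /a1 natrB; last by rewrite /n /D mulnA leq_pmull // muln_gt0 N0.
    rewrite hx /n /D !natrM; field.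
    by rewrite ?c0 ?dQ ?EQ.
  have eE : (E %% n)%:R = E%:R - (E %/ n)%:R * n%:R :> rat.
    apply/eqP; rewrite eq_sym subr_eq -natrM -natrD addnC -divn_eq //.
  have e2 : AQ (a2%:R / D%:R) = AQ x + AQ (N%:R * (- ((E %/ n)%:Z))%:~R).
    rewrite -AQ_add; congr AQ.
    rewrite /a2 eE mulrNz -pmulrn hx /n /D !natrM; field.
    by rewrite ?c0 ?dQ ?EQ.
  have := phi_inv (AQ (- x)) (AQ x) N0 hKN c0 (inM_Mz 1 N0) (inM_Mz (- ((E %/ n)%:Z)) N0).
  rewrite -e1 -e2 -eF.
  have eC : N%:R ^- 2 = x ^+ 2 by rewrite hx exprVn.
  rewrite eC (point N0 hKN hZ); last by rewrite hx mulVf.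
  by rewrite hFa => e; move: f1; rewrite -e eqxx.
case: key => j1 [j2 hS].
exists (j1%:R / N%:R), (- (j2%:R / N%:R)), ((N ^ 2)%:R^-1 * S j1 j2); split; first exact: hK.
by rewrite mulf_neq0 // invr_eq0 pnatr_eq0 expn_eq0 negb_and -lt0n N0.
Qed.
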